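(* Let $q$ be a fixed positive integer, let $n$ be divisible by $q$, let $\varepsilon=\varepsilon(n)$, and let $S$ be a set of ordered $q$-tuples of distinct elements of $[n]$ with $\varepsilon^2|S|^2/n^{2q-1}\gg\log n$. Let $\sigma$ be a uniformly random permutation of $[n]$ and let $N=|S\cap V(D_\sigma)|$, where $V(D_\sigma)=\{(\sigma((i-1)q+1),\dots,\sigma(iq)):i=1,\dots,n/q\}$. Then quite surely $N=(1\pm\varepsilon)\frac{|S|}{qn^{q-1}}$.
   Context: $a_n\gg b_n$ means $a_n/b_n\to\infty$ as $n\to\infty$; $x=(1\pm a)y$ means $(1-a)y\le x\le(1+a)y$. An event sequence $\mathcal E_n$ holds quite surely if $\Pr(\mathcal E_n)=1-O(n^{-K})$ for every positive constant $K$. *)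

(* Defs.v *)
From HB Require Import structures.
From mathcomp Require Import all_boot all_order all_algebra all_fingroup.
From mathcomp Require Import all_classical all_reals all_analysis.
From mathcomp Require Import zify.
Set Implicit Arguments. Unset Strict Implicit. Unset Printing Implicit Defensive.
Import Order.TTheory GRing.Theory Num.Theory.

(* Positions use 0-indexing: [n] = 'I_n with n = q * m.  Block i (i < m)
   consists of positions i*q, ..., i*q + q - 1, i.e. the paper's
   (i-1)q+1, ..., iq shifted by one. *)
Lemma blk_lt (q m : nat) (i : 'I_m) (j : 'I_q) : i * q + j < q * m.
Proof.
have := ltn_ord i; have := ltn_ord j => hj hi.
have h2 : i.+1 * q <= m * q by rewrite leq_mul2r hi orbT.
rewrite mulnC; rewrite mulSn in h2; lia.
Qed.

Definition block (q m : nat) (s : {perm 'I_(q * m)}) (i : 'I_m)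
  : q.-tuple 'I_(q * m) :=
  [tuple s (Ordinal (blk_lt i j)) | j < q].

Definition VD (q m : nat) (s : {perm 'I_(q * m)}) : {set q.-tuple 'I_(q * m)} :=
  [set block s i | i : 'I_m].

Definition Ncount (q m : nat) (S : {set q.-tuple 'I_(q * m)})
  (s : {perm 'I_(q * m)}) : nat := #|S :&: VD s|.

Definition prob_perm (R : realType) (n : nat) (E : pred {perm 'I_n}) : R :=
  (#|[set s | E s]|%:R / #|{perm 'I_n}|%:R)%R.

(* Main.v *)
Require Import Defs.
From HB Require Import structures.
From mathcomp Require Import all_boot all_order all_algebra all_fingroup.
From mathcomp Require Import all_classical all_reals all_analysis.
From mathcomp Require Import zify ring lra.
Import Order.TTheory GRing.Theory Num.Theory.
Import numFieldNormedType.Exports.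
Set Implicit Arguments. Unset Strict Implicit. Unset Printing Implicit Defensive.
Local Open Scope ring_scope.

Fixpoint arr {T : eqType} (k : nat) (U : seq T) : seq (seq T) :=
  if k is k'.+1 then [seq x :: t | x <- U, t <- arr k' (rem x U)] else [:: [::]].

Lemma size_arr (T : eqType) k (U : seq T) : size (arr k U) = ((size U) ^_ k)%N.
Proof.
elim: k U => [|k IH] U /=; first by rewrite ffactn0.
rewrite size_allpairs_dep ffactnS.
set L := sumn _.
have -> : L = sumn (map (fun=> ((size U).-1 ^_ k)%N) U).
  by rewrite /L; congr sumn; apply/eq_in_map => x xU /=; rewrite IH size_rem.
rewrite mulnC; move: ((size U).-1 ^_ k)%N => c.
by elim: U {IH L} => //= [|x U ->]; rewrite ?muln0 // mulnS.
Qed.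
Lemma arr_size (T : eqType) k (U : seq T) t : t \in arr k U -> size t = k.
Proof.
elim: k U t => [|k IH] U t /=; first by rewrite inE => /eqP ->.
by case/allpairsPdep => x [t' [_ ht' ->]] /=; rewrite (IH _ _ ht').
Qed.

Lemma arr_mem (T : eqType) k (U : seq T) t : uniq U ->
  (t \in arr k U) = [&& size t == k, uniq t & all (mem U) t].
Proof.
elim: k U t => [|k IH] U t uU /=.
  by rewrite inE; case: t.
apply/idP/idP.
  case/allpairsPdep => x [t' [xU ht' ->]] /=.
  have uR : uniq (rem x U) by apply: rem_uniq.
  move: ht'; rewrite IH // => /and3P [/eqP -> ut' at'].
  rewrite eqxx ut' xU /= andbT; apply/andP; split.
    apply/negP => xt'; move/allP: at' => /(_ x xt').
    by rewrite /= mem_rem_uniqF.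
  apply/allP => z zt'; move/allP: at' => /(_ z zt') /=.
  by rewrite mem_rem_uniq // inE => /andP [].
case: t => [|x t'] //= /and3P [/eqP [st'] /andP [xt' ut'] /andP [xU at']].
apply/allpairsPdep; exists x, t'; split => //.
rewrite IH ?rem_uniq // st' eqxx ut' /=.
apply/allP => z zt'; rewrite /= mem_rem_uniq // inE; have -> : z \in U := allP at' z zt'; rewrite andbT.

by apply/eqP => zx; rewrite -zx zt' in xt'.
Qed.

Lemma arr_uniq (T : eqType) k (U : seq T) : uniq U -> uniq (arr k U).
Proof.
elim: k U => [|k IH] U uU //=.
apply: allpairs_uniq_dep => //.
  by move=> x _; apply: IH; apply: rem_uniq.
by move=> [x1 t1] [x2 t2] _ _ /= [-> ->].
Qed.

Lemma map_rem_inj (T1 T2 : eqType) (f : T1 -> T2) (x : T1) (s : seq T1) :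
  injective f -> map f (rem x s) = rem (f x) (map f s).
Proof.
move=> fi; elim: s => [|y s IH] //=.
by rewrite (inj_eq fi); case: eqP => //= _; rewrite IH.
Qed.

Lemma sum_arr_map (R : numDomainType) (T : eqType) (f : T -> T) k (U : seq T) (H : seq T -> R) :
  injective f ->
  \sum_(s <- arr k (map f U)) H s = \sum_(s <- arr k U) H (map f s).
Proof.
move=> fi; elim: k U H => [|k IH] U H /=; first by rewrite !big_seq1.
rewrite !big_allpairs_dep big_map; apply: eq_bigr => x _.
rewrite -map_rem_inj // (IH _ (fun t => H (f x :: t))).
Qed.

Lemma sum_arr_perm (R : numDomainType) (T : eqType) k (U V : seq T) (H : seq T -> R) :
  uniq U -> perm_eq U V ->
  \sum_(s <- arr k U) H s = \sum_(s <- arr k V) H s.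
Proof.
move=> uU pUV; have uV : uniq V by rewrite -(perm_uniq pUV).
apply: perm_big; apply: uniq_perm; rewrite ?arr_uniq // => t.
rewrite !arr_mem //; congr [&& _, _ & _]; apply: eq_all => z /=.
by rewrite (perm_mem pUV).
Qed.

Lemma sum_arr_swap (R : numDomainType) (T : finType) k (U : seq T) (H : seq T -> R) x y :
  uniq U -> x \in U -> y \in U ->
  \sum_(s <- arr k (rem y U)) H s = \sum_(s <- arr k (rem x U)) H (map (tperm x y) s).
Proof.
move=> uU xU yU.
rewrite -sum_arr_map; last exact: perm_inj.
symmetry; apply: sum_arr_perm.
  by rewrite map_inj_uniq ?rem_uniq //; apply: perm_inj.
apply: uniq_perm; rewrite ?map_inj_uniq ?rem_uniq //; try apply: perm_inj.
move=> z; rewrite mem_rem_uniq // inE.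
have -> : z = tperm x y (tperm x y z) by rewrite tpermK.
rewrite (mem_map (@perm_inj _ (tperm x y))) mem_rem_uniq // inE tpermK.
case: (tpermP x y z) => [->|->|/eqP zx /eqP zy]; rewrite ?xU ?yU ?eqxx //=.
- by rewrite eq_sym.
- by rewrite zx zy.
Qed.

Definition avg (R : realType) (A : Type) (xs : seq A) (f : A -> R) : R :=
  (\sum_(x <- xs) f x) / (size xs)%:R.

Lemma expR_le_quad (R : realType) (u : R) : `|u| <= 1/2 -> expR u <= 1 + u + 2 * u ^+ 2.
Proof.
move=> hu.
have hu' : - (1/2) <= u <= 1/2 by rewrite -ler_norml.
case/andP: hu' => h1 h2.
have h3 : 1 - u <= expR (- u) by have := expR_ge1Dx (- u); lra.
have h5 : expR u * (1 - u) <= 1.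
  have : expR u * expR (- u) = 1 by rewrite -expRD subrr expR0.
  have := expR_gt0 u; nra.
have h6 : 1 <= (1 - u) * (1 + u + 2 * u ^+ 2).
  have : 0 <= u ^+ 2 * (1 - 2 * u) by apply: mulr_ge0; [apply: sqr_ge0| lra].
  nra.
set e := expR u in h5 *; set p := 1 + u + 2 * u ^+ 2 in h6 *.
have hp : 0 <= p by rewrite /p; nra.
have he : 0 < e by apply: expR_gt0.
have : e <= e * ((1 - u) * p) by rewrite -{1}[e]mulr1 ler_wpM2l // ltW.
have : e * ((1 - u) * p) = (e * (1 - u)) * p by rewrite mulrA.
have : (e * (1 - u)) * p <= p by rewrite -{2}[p]mul1r ler_wpM2r.
lra.
Qed.

Lemma hoeff (R : realType) (A : eqType) (xs : seq A) (a : A -> R) (lam c : R) :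
  (0 < size xs)%N -> (forall x, x \in xs -> `|a x| <= c) -> `|lam| * c <= 1/2 ->
  \sum_(x <- xs) a x = 0 ->
  avg xs (fun x => expR (lam * a x)) <= expR (2 * lam ^+ 2 * c ^+ 2).
Proof.
move=> hs ha hl hsum.
have hn : 0 < (size xs)%:R :> R by rewrite ltr0n.
rewrite /avg ler_pdivrMr //.
apply: (@le_trans _ _ (\sum_(x <- xs) (1 + lam * a x + 2 * (lam ^+ 2 * c ^+ 2)))).
  rewrite big_seq [X in _ <= X]big_seq; apply: ler_sum => x xs'.
  have hax := ha x xs'.
  have hlx : `|lam * a x| <= 1/2.
    rewrite normrM; apply: le_trans hl; apply: ler_wpM2l => //.
  apply: le_trans (expR_le_quad hlx) _.
  rewrite lerD2l exprMn ler_wpM2l //; apply: ler_wpM2l; first exact: sqr_ge0.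
  rewrite -[a x ^+ 2]real_normK ?num_real // ; apply: lerXn2r; rewrite ?nnegrE //.
  exact: le_trans hax.
rewrite !big_split /= -mulr_sumr hsum mulr0 addr0 !big_const_seq.
rewrite !iter_addr_0 count_predT -mulrnDl -[X in X <= _]mulr_natr ler_wpM2r //.
have := expR_ge1Dx (2 * lam ^+ 2 * c ^+ 2); lra.
Qed.

Lemma sum_arrS (R : realType) (T : eqType) k (U : seq T) (G : seq T -> R) :
  \sum_(s <- arr k.+1 U) G s = \sum_(x <- U) \sum_(t <- arr k (rem x U)) G (x :: t).
Proof. by rewrite /= big_allpairs_dep. Qed.

Lemma sum_const_seq (R : realType) (A : Type) (xs : seq A) (c : R) :
  \sum_(x <- xs) c = c * (size xs)%:R.
Proof. by rewrite big_const_seq iter_addr_0 count_predT mulr_natr. Qed.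

Lemma expo (R : realType) (T : finType) (k : nat) : forall (U : seq T) (F : seq T -> R) (c lam : R),
  uniq U -> size U = k -> 0 <= c -> `|lam| * c <= 1/2 ->
  (forall s y z, s \in arr k U -> y \in U -> z \in U -> `|F (map (tperm y z) s) - F s| <= c) ->
  avg (arr k U) (fun s => expR (lam * (F s - avg (arr k U) F))) <= expR (2 * lam ^+ 2 * c ^+ 2 * k%:R).
Proof.
elim: k => [|k IH] U F c lam uU sU hc hl hbd.
  rewrite /avg /= !big_seq1 /=.
  by rewrite !divr1 subrr mulr0 expR0 mulr0 expR0.
set L := (k`!)%:R : R.
have hL : 0 < L by rewrite ltr0n fact_gt0.
have hsz : forall x, x \in U -> size (arr k (rem x U)) = k`!.
  by move=> x xU; rewrite size_arr size_rem // sU /= ffactnn.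
have hszS : size (arr k.+1 U) = (k.+1)`! by rewrite size_arr sU ffactnn.
pose mu x := avg (arr k (rem x U)) (fun t => F (x :: t)).
have hmuE : forall x, x \in U -> \sum_(t <- arr k (rem x U)) F (x :: t) = mu x * L.
  by move=> x xU; rewrite /mu /avg hsz // mulfVK // gt_eqF.
set M := avg (arr k.+1 U) F.
have hk1 : 0 < k.+1%:R :> R by rewrite ltr0n.
have hM : M = (\sum_(x <- U) mu x) / k.+1%:R.
  rewrite /M /avg sum_arrS hszS (eq_big_seq _ hmuE) -mulr_suml factS natrM -/L.
  by field; rewrite gt_eqF //; rewrite gt_eqF.
have hdiff : forall x y, x \in U -> y \in U -> `|mu y - mu x| <= c.
  move=> x y xU yU; rewrite /mu /avg (hsz y yU) (hsz x xU) (@sum_arr_swap R T k U (fun t => F (y :: t)) x y uU xU yU).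
  rewrite -/L -mulrBl -sumrB normrM (ger0_norm (_ : 0 <= L^-1)); last by rewrite invr_ge0 ltW.
  rewrite ler_pdivrMr //.
  apply: le_trans (ler_norm_sum _ _ _) _.
  apply: (@le_trans _ _ (\sum_(t <- arr k (rem x U)) c)); last by rewrite sum_const_seq hsz.
  rewrite big_seq [X in _ <= X]big_seq; apply: ler_sum => t ht.
  have -> : y :: map (tperm x y) t = map (tperm x y) (x :: t) by rewrite /= tpermL.
  apply: hbd => //=; apply/allpairsPdep; exists x, t; split => //.
have hsU : (size U)%:R = k.+1%:R :> R by rewrite sU.
have hdev : forall x, x \in U -> `|mu x - M| <= c.
  move=> x xU.
  have -> : mu x - M = (\sum_(y <- U) (mu x - mu y)) / k.+1%:R.
    rewrite sumrB sum_const_seq hsU hM; field; rewrite gt_eqF //.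
  rewrite normrM (ger0_norm (_ : 0 <= k.+1%:R^-1)); last by rewrite invr_ge0 ltW.
  rewrite ler_pdivrMr //.
  apply: le_trans (ler_norm_sum _ _ _) _.
  apply: (@le_trans _ _ (\sum_(y <- U) c)); last by rewrite sum_const_seq hsU.
  rewrite big_seq [X in _ <= X]big_seq; apply: ler_sum => y yU.
  by rewrite distrC; apply: hdiff.
set E := expR (2 * lam ^+ 2 * c ^+ 2 * k%:R).
have hIH : forall x, x \in U ->
    avg (arr k (rem x U)) (fun t => expR (lam * (F (x :: t) - mu x))) <= E.
  move=> x xU; apply: (IH _ (fun t => F (x :: t))) => //.
  - exact: rem_uniq.
  - by rewrite size_rem // sU.
  move=> s y z hs yR zR.
  have xR : x \notin rem x U by rewrite mem_rem_uniqF.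
  have xy : y != x by apply/eqP => yx; move: yR; rewrite yx mem_rem_uniqF.
  have xz : z != x by apply/eqP => zx; move: zR; rewrite zx mem_rem_uniqF.
  have -> : x :: map (tperm y z) s = map (tperm y z) (x :: s) by rewrite /= tpermD.
  apply: hbd; [|exact: mem_rem yR|exact: mem_rem zR].
  by apply/allpairsPdep; exists x, s; split.
have key : \sum_(s <- arr k.+1 U) expR (lam * (F s - M)) <=
           \sum_(x <- U) expR (lam * (mu x - M)) * (E * L).
  rewrite sum_arrS big_seq [X in _ <= X]big_seq; apply: ler_sum => x xU.
  have h := hIH x xU; move: h; rewrite /avg hsz // -/L => h.
  rewrite (eq_bigr (fun t => expR (lam * (mu x - M)) * expR (lam * (F (x :: t) - mu x)))); last first.
    by move=> t _; rewrite -expRD; congr expR; ring.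
  rewrite -mulr_sumr; apply: ler_wpM2l; first exact: ltW (expR_gt0 _).
  by rewrite -ler_pdivrMr.
have hsum0 : \sum_(x <- U) (mu x - M) = 0.
  rewrite sumrB sum_const_seq hsU hM; field; rewrite gt_eqF //.
have hh := hoeff (lam := lam) (c := c) _ hdev hl hsum0.
rewrite sU ltn0Sn in hh; have {}hh := hh isT.
rewrite /avg hszS factS natrM -/L.
apply: (@le_trans _ _ ((\sum_(x <- U) expR (lam * (mu x - M)) * (E * L)) / (k.+1%:R * L))).
  by apply: ler_wpM2r => //; rewrite invr_ge0 mulr_ge0 // ltW.
rewrite -mulr_suml.
have -> : (\sum_(x <- U) expR (lam * (mu x - M))) * (E * L) / (k.+1%:R * L)
   = E * avg U (fun x => expR (lam * (mu x - M))).
  rewrite /avg hsU; field; rewrite !gt_eqF //.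
apply: le_trans (ler_wpM2l (ltW (expR_gt0 _)) hh) _.
rewrite /E -expRD le_eqVlt; apply/orP; left; apply/eqP; congr expR; rewrite -addn1 natrD; ring.
Qed.

Lemma avg_ler (R : realType) (A : eqType) (xs : seq A) (f g : A -> R) :
  (forall x, x \in xs -> f x <= g x) -> avg xs f <= avg xs g.
Proof.
move=> h; rewrite /avg ler_wpM2r ?invr_ge0 //.
by rewrite big_seq [X in _ <= X]big_seq; apply: ler_sum => x /h.
Qed.

Lemma avg_mull (R : realType) (A : Type) (xs : seq A) (f : A -> R) a :
  avg xs (fun x => a * f x) = a * avg xs f.
Proof. by rewrite /avg -mulr_sumr mulrA. Qed.

Lemma avg_const_le (R : realType) (A : eqType) (xs : seq A) (f : A -> R) b :
  (0 < size xs)%N -> (forall x, x \in xs -> f x <= b) -> avg xs f <= b.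
Proof.
move=> hs h; rewrite /avg ler_pdivrMr ?ltr0n //.
rewrite -sum_const_seq big_seq [X in _ <= X]big_seq; apply: ler_sum => x /h.
by [].
Qed.

Lemma avg_const_ge (R : realType) (A : eqType) (xs : seq A) (f : A -> R) b :
  (0 < size xs)%N -> (forall x, x \in xs -> b <= f x) -> b <= avg xs f.
Proof.
move=> hs h; rewrite /avg ler_pdivlMr ?ltr0n //.
rewrite -sum_const_seq big_seq [X in _ <= X]big_seq; apply: ler_sum => x /h.
by [].
Qed.

Lemma tail_one (R : realType) (A : eqType) (xs : seq A) (D : A -> R) (c K t : R) :
  0 < c -> 0 < K -> 0 < t -> (forall x, x \in xs -> D x <= 2 * c * K) ->
  (forall lam, 0 <= lam -> lam * c <= 1/2 ->
     avg xs (fun x => expR (lam * D x)) <= expR (2 * lam ^+ 2 * c ^+ 2 * K)) ->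
  avg xs (fun x => if t <= D x then 1 else 0) <= expR (- (t ^+ 2 / (8 * c ^+ 2 * K))).
Proof.
move=> hc hK ht hD hexp.
case: (leP t (2 * c * K)) => htK; last first.
  apply: (@le_trans _ _ (avg xs (fun=> 0))).
    apply: avg_ler => x xs'; have := hD x xs'.
    move=> h1; case: (leP t (D x)) => // h2; exfalso; lra.
  by rewrite /avg big1 // mul0r ltW // expR_gt0.
set lam := t / (4 * c ^+ 2 * K).
have hc2 : 0 < c ^+ 2 by rewrite exprn_gt0.
have hden : 0 < 4 * c ^+ 2 * K by rewrite !mulr_gt0.
have hlam : 0 <= lam by rewrite /lam divr_ge0 // ltW.
have hlc : lam * c <= 1/2.
  have -> : lam * c = t / (4 * c * K) by rewrite /lam; field; rewrite !gt_eqF.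
  have h4 : 0 < 4 * c * K by rewrite !mulr_gt0.
  rewrite ler_pdivrMr //; lra.
apply: (@le_trans _ _ (avg xs (fun x => expR (- (lam * t)) * expR (lam * D x)))).
  apply: avg_ler => x _; case: (leP t (D x)) => htx.
    rewrite -expRD; have h1 := expR_ge1Dx (- (lam * t) + lam * D x).
    have : 0 <= - (lam * t) + lam * D x by rewrite addrC subr_ge0 ler_wpM2l.
    lra.
  by rewrite mulr_ge0 // ltW // expR_gt0.
rewrite avg_mull.
apply: le_trans (ler_wpM2l (ltW (expR_gt0 _)) (hexp _ hlam hlc)) _.
rewrite -expRD.
have -> : - (lam * t) + 2 * lam ^+ 2 * c ^+ 2 * K = - (t ^+ 2 / (8 * c ^+ 2 * K)).
  by rewrite /lam; field; rewrite !gt_eqF.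
by [].
Qed.

Lemma tails (R : realType) (T : finType) (k : nat) (U : seq T) (F : seq T -> R) (c t : R) :
  uniq U -> size U = k -> (0 < k)%N -> 0 < c ->
  (forall s y z, s \in arr k U -> y \in U -> z \in U -> `|F (map (tperm y z) s) - F s| <= c) ->
  (forall s, s \in arr k U -> 0 <= F s <= 2 * c * k%:R) -> 0 < t ->
  avg (arr k U) (fun s => if t <= F s - avg (arr k U) F then 1 else 0)
     <= expR (- (t ^+ 2 / (8 * c ^+ 2 * k%:R))) /\
  avg (arr k U) (fun s => if t <= avg (arr k U) F - F s then 1 else 0)
     <= expR (- (t ^+ 2 / (8 * c ^+ 2 * k%:R))).
Proof.
move=> uU sU k0 hc hbd hF ht.
have hsz : (0 < size (arr k U))%N by rewrite size_arr sU ffactnn fact_gt0.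
set M := avg (arr k U) F.
have hM0 : 0 <= M by apply: avg_const_ge => // s /hF /andP [].
have hM1 : M <= 2 * c * k%:R by apply: avg_const_le => // s /hF /andP [].
have hk : 0 < k%:R :> R by rewrite ltr0n.
split.
  apply: tail_one => //.
    by move=> s /hF /andP [h1 h2]; lra.
  move=> lam hl hlc.
  have := expo (lam := lam) uU sU (ltW hc) _ hbd.
  by rewrite ger0_norm //; apply.
apply: tail_one => //.
  by move=> s /hF /andP [h1 h2]; lra.
move=> lam hl hlc.
have := expo (lam := - lam) uU sU (ltW hc) _ hbd.
rewrite normrN ger0_norm // sqrrN => /(_ hlc) h.
apply: le_trans h; apply: avg_ler => s _.
by rewrite mulNr -mulrN opprB.
Qed.

Definition remb (T : eqType) (b U : seq T) := foldl (fun V x => rem x V) U b.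

Lemma sum_arr_cat (R : realType) (T : eqType) k r (U : seq T) (H : seq T -> R) :
  \sum_(s <- arr (k + r) U) H s =
  \sum_(b <- arr k U) \sum_(s <- arr r (remb b U)) H (b ++ s).
Proof.
elim: k U H => [|k IH] U H; first by rewrite add0n /= big_seq1.
rewrite addSn !sum_arrS; apply: eq_bigr => x _.
by rewrite (IH _ (fun s => H (x :: s))).
Qed.

Lemma size_remb (T : eqType) k (U : seq T) b : b \in arr k U -> size (remb b U) = (size U - k)%N.
Proof.
elim: k U b => [|k IH] U b /=; first by rewrite inE subn0 => /eqP ->.
case/allpairsPdep => x [t [xU ht ->]] /=.
by rewrite (IH _ _ ht) size_rem // subnS -subn1 subnAC subn1.
Qed.

Lemma sum_arr_rot (R : realType) (T : eqType) k (U : seq T) (H : seq T -> R) j :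
  uniq U -> \sum_(s <- arr k U) H (rot j s) = \sum_(s <- arr k U) H s.
Proof.
move=> uU; rewrite -(big_map (rot j) xpredT H); apply: perm_big.
apply: uniq_perm.
- by rewrite (map_inj_uniq (@rot_inj j _)) arr_uniq.
- exact: arr_uniq.
have hm : forall s, (rot j s \in arr k U) = (s \in arr k U).
  by move=> s; rewrite !arr_mem // size_rot rot_uniq (eq_all_r (mem_rot j s)).
move=> s; apply/mapP/idP.
  by case=> s' hs' ->; rewrite hm.
move=> hs; exists (rotr j s); last by rewrite rotrK.
by rewrite -hm rotrK.
Qed.

Definition Nb (R : realType) (T : eqType) (q m : nat) (P : pred (seq T)) (s : seq T) : R :=
  \sum_(i < m) (P (take q (drop (i * q) s)))%:R.

Lemma sum_count (R : realType) (A : Type) (P : pred A) (xs : seq A) :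
  \sum_(b <- xs) (P b)%:R = (count P xs)%:R :> R.
Proof. by elim: xs => [|x xs IH]; rewrite ?big_nil ?big_cons ?IH ?natrD. Qed.

Lemma sum_Nb (R : realType) (T : eqType) q m (P : pred (seq T)) (U : seq T) :
  uniq U -> size U = (q * m)%N ->
  \sum_(s <- arr (q * m) U) Nb R q m P s =
  m%:R * (count P (arr q U))%:R * ((q * m - q)`!)%:R.
Proof.
move=> uU sU; rewrite /Nb exchange_big /=.
case: m sU => [|m] sU; first by rewrite big_ord0 mul0r mul0r.
have hq : (q <= q * m.+1)%N by rewrite leq_pmulr.
have hi : forall i : 'I_m.+1, \sum_(s <- arr (q * m.+1) U) (P (take q (drop (i * q) s)))%:R
      = \sum_(s <- arr (q * m.+1) U) (P (take q s))%:R :> R.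
  move=> i; rewrite -(@sum_arr_rot R T (q * m.+1) U (fun s => (P (take q s))%:R) (i * q) uU).
  apply: eq_big_seq => s hs; rewrite /rot takel_cat // size_drop (arr_size hs).
  have := ltn_ord i; move=> hi.
  have : (i.+1 * q <= m.+1 * q)%N by rewrite leq_mul2r ltn_ord orbT.
  rewrite mulSn; lia.
rewrite (eq_bigr _ (fun i _ => hi i)) sumr_const card_ord -mulr_natl.
rewrite -[(q * m.+1)%N](subnKC hq) sum_arr_cat.
rewrite (eq_big_seq (fun b => (P b)%:R * ((q * m.+1 - q)`!)%:R)); last first.
  move=> b hb; rewrite (eq_bigr (fun=> (P b)%:R)); last first.
    by move=> s _; rewrite takel_cat ?(arr_size hb) // take_oversize ?(arr_size hb).
  rewrite sum_const_seq size_arr (size_remb hb) sU ffactnn.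
  by [].
by rewrite -big_distrl /= sum_count -[LHS]mulr_natl mulrA mulr1 (subnKC hq).
Qed.

Lemma count_blocks (T : Type) q m (p : pred T) (s : seq T) :
  (\sum_(i < m) count p (take q (drop (i * q) s)))%N = count p (take (m * q) s).
Proof.
elim: m => [|m IH]; first by rewrite big_ord0 mul0n take0.
by rewrite big_ord_recr /= IH mulSnr takeD count_cat.
Qed.

Lemma ind_blocks (R : realType) (T : eqType) q m (s : seq T) y :
  uniq s -> \sum_(i < m) (y \in take q (drop (i * q) s))%:R <= 1 :> R.
Proof.
move=> us.
rewrite (eq_bigr (fun i : 'I_m => (count_mem y (take q (drop (i * q) s)))%:R)); last first.
  by move=> i _; rewrite count_uniq_mem // take_uniq // drop_uniq.
rewrite -natr_sum count_blocks count_uniq_mem ?take_uniq //.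
by case: (_ \in _).
Qed.
Lemma dummy1 : True.
Proof. by [].
Qed.

Lemma Nb_bd (R : realType) (T : finType) q m (P : pred (seq T)) (s : seq T) y z :
  uniq s -> `|Nb R q m P (map (tperm y z) s) - Nb R q m P s| <= 2.
Proof.
move=> us; rewrite /Nb -sumrB.
apply: le_trans (ler_norm_sum _ _ _) _.
apply: (@le_trans _ _ (\sum_(i < m) ((y \in take q (drop (i * q) s))%:R
                                    + (z \in take q (drop (i * q) s))%:R))); last first.
  by rewrite big_split /= -[2 : R]/(1 + 1); apply: lerD; apply: ind_blocks.
apply: ler_sum => i _.
rewrite -map_drop -map_take.
set B := take q (drop (i * q) s).
have h01 : forall a b : bool, `|a%:R - b%:R| <= 1 :> R.
  by case; case; rewrite ?subrr ?normr0 ?subr0 ?sub0r ?normrN ?normr1.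
case hy: (y \in B); case hz: (z \in B).
- apply: le_trans (h01 _ _) _; rewrite /=; lra.
- apply: le_trans (h01 _ _) _; rewrite /=; lra.
- apply: le_trans (h01 _ _) _; rewrite /=; lra.
rewrite map_id_in ?subrr ?normr0 //.
move=> w wB /=; apply: tpermD; apply/eqP => e; subst w.
  by rewrite wB in hy.
by rewrite wB in hz.
Qed.

Definition pseq n (s : {perm 'I_n}) : seq 'I_n := map s (enum 'I_n).

Lemma nth_pseq n (s : {perm 'I_n}) x0 (i : 'I_n) : nth x0 (pseq s) i = s i.
Proof. by rewrite /pseq (nth_map i) ?size_enum_ord ?ltn_ord // nth_ord_enum. Qed.

Lemma pseq_inj n : injective (@pseq n).
Proof.
move=> s1 s2 h; apply/permP => i.
by rewrite -(nth_pseq s1 i i) h nth_pseq.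
Qed.

Lemma perm_pseq n : perm_eq (map (@pseq n) (enum {perm 'I_n})) (arr n (enum 'I_n)).
Proof.
have uU : uniq (enum 'I_n) := enum_uniq _.
apply: uniq_perm.
- by rewrite (map_inj_uniq (@pseq_inj n)) enum_uniq.
- exact: arr_uniq.
move=> s; apply/mapP/idP.
  case=> p _ ->; rewrite arr_mem // /pseq size_map size_enum_ord eqxx.
  rewrite (map_inj_uniq (@perm_inj _ p)) uU /=.
  by apply/allP => x _; rewrite /= mem_enum.
rewrite arr_mem // => /and3P [/eqP ss us _].
pose f := fun i : 'I_n => nth i s i.
have finj : injective f.
  move=> i j; rewrite /f (set_nth_default i j) ?ss ?ltn_ord //.
  by move/eqP; rewrite nth_uniq ?ss ?ltn_ord // => /eqP /val_inj.
exists (perm finj); first by rewrite mem_enum.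
symmetry; case Es: s => [|x0 s'].
  by apply: size0nil; rewrite /pseq size_map size_enum_ord -ss Es.
rewrite -Es; apply: (@eq_from_nth _ x0).
  by rewrite /pseq size_map size_enum_ord ss.
move=> i; rewrite /pseq size_map size_enum_ord => hi.
have -> : i = Ordinal hi by [].
by rewrite nth_pseq permE /f (set_nth_default x0) ?ss.
Qed.


Lemma prob_avg (R : realType) n (E : pred (seq 'I_n)) :
  prob_perm R (fun s => E (pseq s)) = avg (arr n (enum 'I_n)) (fun s => (E s)%:R).
Proof.
rewrite /prob_perm /avg card_Sn size_arr size_enum_ord ffactnn; congr (_ / _).
rewrite -(perm_big _ (perm_pseq n)) big_map big_enum /=.
rewrite -sum1dep_card natr_sum big_mkcond /=.
by apply: eq_bigr => s _; case: (E _).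
Qed.

Lemma val_block q m (s : {perm 'I_(q * m)}) (i : 'I_m) :
  val (block s i) = take q (drop (i * q) (pseq s)).
Proof.
have hsz : size (take q (drop (i * q) (pseq s))) = q.
  rewrite size_takel // size_drop /pseq size_map size_enum_ord.
  have := ltn_ord i; nia.
case: q s hsz => [|q] s hsz.
  by rewrite take0; apply: size0nil; rewrite size_tuple.
apply: (@eq_from_nth _ (s (Ordinal (blk_lt i ord0)))); first by rewrite size_tuple hsz.
move=> j; rewrite size_tuple => hj.
rewrite /block /= (nth_mktuple _ _ (Ordinal hj)).
rewrite nth_take // nth_drop.
have h := blk_lt i (Ordinal hj).
by symmetry; exact: (nth_pseq s _ (Ordinal (blk_lt i (Ordinal hj)))).
Qed.

Lemma block_inj q m (s : {perm 'I_(q * m)}) : (0 < q)%N -> injective (block s).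
Proof.
case: q s => [|q] s // _ i j h.
have := congr1 (fun t => tnth t ord0) h; rewrite /block !tnth_mktuple.
move/perm_inj => /(congr1 val) /=; rewrite !addn0 => /eqP.
by rewrite eqn_mul2r /= => /eqP /val_inj.
Qed.

Lemma Ncount_Nb (R : realType) q m (S : {set q.-tuple 'I_(q * m)}) (s : {perm 'I_(q * m)}) :
  (0 < q)%N ->
  (Ncount S s)%:R = Nb R q m (fun b => b \in map val (enum S)) (pseq s).
Proof.
move=> hq; rewrite /Ncount.
have -> : S :&: VD s = block s @: [set i | block s i \in S].
  apply/setP => t; rewrite inE /VD; apply/andP/imsetP.
    case=> tS /imsetP [i _ ti]; exists i => //; rewrite inE -ti //.
  case=> i; rewrite inE => hi ->; split => //; apply/imsetP; exists i => //.
rewrite card_imset; last exact: block_inj.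
rewrite -sum1dep_card natr_sum big_mkcond /Nb /=.
apply: eq_bigr => i _; rewrite -val_block (mem_map val_inj) mem_enum.
by case: (_ \in _).
Qed.

Lemma ffact_le_exp n k : (n ^_ k <= n ^ k)%N.
Proof.
elim: k => [|k IH]; first by rewrite ffactn0 expn0.
rewrite ffactnSr expnS; have := leq_subr k n; nia.
Qed.

Lemma ffact_approx n k : (n ^ k * n <= n ^_ k * n + k ^ 2 * n ^ k)%N.
Proof.
elim: k => [|k IH]; first by rewrite ffactn0 expn0 mul0n addn0.
have hX := ffact_le_exp n k.
rewrite ffactnSr expnS.
case: (leqP k n) => hkn; last first.
  have -> : (n - k = 0)%N by apply/eqP; rewrite subn_eq0 ltnW.
  rewrite muln0 mul0n add0n.
  have : (n <= k.+1 ^ 2)%N by rewrite expnS expn1; nia.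
  nia.
move: IH hX; move: (n ^_ k)%N (n ^ k)%N => X Y IH hX.
have [d hd] : exists d, n = (d + k)%N by exists (n - k)%N; rewrite subnK.
rewrite hd addnK in IH hX *.
rewrite !expnS ?expn1 ?expn0 in IH *.
have h1 : (X * (d + k) * k <= Y * (d + k) * k)%N by rewrite leq_mul2r leq_mul2r hX !orbT.
nia.
Qed.

Lemma cnt_S q m (S : {set q.-tuple 'I_(q * m)}) :
  (forall t : q.-tuple 'I_(q * m), t \in S -> uniq t) ->
  count (fun b => b \in map val (enum S)) (arr q (enum 'I_(q * m))) = #|S|.
Proof.
move=> hS; rewrite -size_filter cardE -(size_map val).
apply: perm_size; apply: uniq_perm.
- by apply: filter_uniq; apply: arr_uniq; apply: enum_uniq.
- by rewrite (map_inj_uniq val_inj) enum_uniq.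
move=> b; rewrite mem_filter; apply/andP/idP => [[] //|hb]; split => //.
case/mapP: hb => t; rewrite mem_enum => tS ->.
rewrite arr_mem ?enum_uniq // size_tuple eqxx hS //=.
by apply/allP => x _; rewrite /= mem_enum.
Qed.

Lemma mu_exact (R : realType) q m (S : {set q.-tuple 'I_(q * m)}) :
  (0 < q)%N -> (0 < m)%N ->
  (forall t : q.-tuple 'I_(q * m), t \in S -> uniq t) ->
  avg (arr (q * m) (enum 'I_(q * m))) (Nb R q m (fun b => b \in map val (enum S)))
  = m%:R * #|S|%:R / ((q * m) ^_ q)%:R.
Proof.
move=> hq hm hS.
rewrite /avg sum_Nb ?enum_uniq ?size_enum_ord // cnt_S // size_arr size_enum_ord ffactnn.
have hqm : (q <= q * m)%N by rewrite leq_pmulr.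
rewrite -(ffact_fact hqm) natrM.
have h1 : ((q * m - q)`!)%:R != 0 :> R by rewrite pnatr_eq0 -lt0n fact_gt0.
have h2 : ((q * m) ^_ q)%:R != 0 :> R.
  by rewrite pnatr_eq0 -lt0n ffact_gt0.
by field; rewrite h1 h2.
Qed.

Lemma mu_close (R : realType) (Sz e qr mr a ffr : R) :
  0 < Sz -> 0 < e -> 0 < qr -> 0 < mr -> 0 < a -> 0 < ffr ->
  ffr <= qr * mr * a -> qr * mr * a <= ffr + qr ^+ 2 * a ->
  2 * qr ^+ 2 <= qr * mr -> 4 * qr ^+ 2 <= e * (qr * mr) ->
  Sz / (qr * a) <= mr * Sz / ffr /\
  mr * Sz / ffr - Sz / (qr * a) <= e * (Sz / (qr * a)) / 2.
Proof.
move=> hS he hq hm ha hf h1 h2 h3 h4.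
set D := qr * mr * a - ffr.
have hD0 : 0 <= D by rewrite /D subr_ge0.
have hD1 : D <= qr ^+ 2 * a by rewrite /D; lra.
have hqa : 0 < qr * a by rewrite mulr_gt0.
have hE : mr * Sz / ffr - Sz / (qr * a) = Sz * D / (qr * a * ffr).
  by rewrite /D; field; rewrite !gt_eqF.
have hpos : 0 < qr * a * ffr by rewrite !mulr_gt0.
split.
  rewrite -subr_ge0 hE; apply: divr_ge0; [apply: mulr_ge0 => //; exact: ltW | exact: ltW].
rewrite hE.
have key : 2 * D <= e * ffr.
  have ha2 : 0 <= qr ^+ 2 * a by rewrite mulr_ge0 // ltW // exprn_gt0.
  have f1 : qr * mr * a / 2 <= ffr.
    have : qr ^+ 2 * a <= qr * mr * a / 2.
      have : 2 * qr ^+ 2 * a <= qr * mr * a by rewrite ler_wpM2r // ltW.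
      lra.
    lra.
  have f2 : e * (qr * mr * a / 2) <= e * ffr by rewrite ler_wpM2l // ltW.
  have f3 : 4 * qr ^+ 2 * a <= e * (qr * mr) * a by rewrite ler_wpM2r // ltW.
  have f4 : e * (qr * mr * a / 2) = e * (qr * mr) * a / 2 by rewrite !mulrA.
  lra.
have -> : e * (Sz / (qr * a)) / 2 = (Sz * (e * ffr) / 2) / (qr * a * ffr).
  by field; rewrite !gt_eqF.
rewrite ler_pM2r ?invr_gt0 //.
have : Sz * (2 * D) <= Sz * (e * ffr) by rewrite ler_wpM2l // ltW.
lra.
Qed.


Lemma avg_add (R : realType) (A : Type) (xs : seq A) (f g : A -> R) :
  avg xs (fun x => f x + g x) = avg xs f + avg xs g.
Proof. by rewrite /avg big_split mulrDl. Qed.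

Lemma ffact_approxR (R : realType) n k :
  n%:R ^+ k * n%:R <= (n ^_ k)%:R * n%:R + k%:R ^+ 2 * n%:R ^+ k :> R.
Proof. by rewrite -!natrX -!natrM -natrD ler_nat ffact_approx. Qed.

Lemma prob_bound (R : realType) q m (S : {set q.-tuple 'I_(q * m)}) (e : R) :
  (0 < q)%N -> (0 < m)%N -> (forall t : q.-tuple 'I_(q * m), t \in S -> uniq t) -> 0 < e ->
  0 < #|S|%:R :> R ->
  2 * q%:R ^+ 2 <= (q * m)%:R :> R -> 4 * q%:R ^+ 2 <= e * (q * m)%:R ->
  prob_perm R (fun s : {perm 'I_(q * m)} =>
     ~~ ((1 - e) * (#|S|%:R / (q%:R * ((q * m)%:R) ^+ (q - 1)))
           <= (Ncount S s)%:R <=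
         (1 + e) * (#|S|%:R / (q%:R * ((q * m)%:R) ^+ (q - 1)))))
  <= 2 * expR (- ((e * (#|S|%:R / (q%:R * ((q * m)%:R) ^+ (q - 1))) / 2) ^+ 2
                  / (8 * 2 ^+ 2 * (q * m)%:R))).
Proof.
move=> hq hm hS he hSz h2q h4q.
set mu0 := #|S|%:R / _.
set t := e * mu0 / 2.
set P := fun b : seq 'I_(q * m) => b \in map val (enum S).
set F := Nb R q m P.
have -> : prob_perm R (fun s : {perm 'I_(q * m)} => ~~ ((1 - e) * mu0 <= (Ncount S s)%:R <= (1 + e) * mu0))
    = avg (arr (q * m) (enum 'I_(q * m))) (fun x => (~~ ((1 - e) * mu0 <= F x <= (1 + e) * mu0))%:R).
  rewrite -(prob_avg R (fun x => ~~ ((1 - e) * mu0 <= F x <= (1 + e) * mu0))).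
  by congr prob_perm; apply: funext => s; rewrite Ncount_Nb.
set U := enum 'I_(q * m).
set mu := avg (arr (q * m) U) F.
have hmu : mu = m%:R * #|S|%:R / ((q * m) ^_ q)%:R by apply: mu_exact.
set nr := (q * m)%:R : R.
set a := nr ^+ (q - 1).
have hnr : 0 < nr by rewrite ltr0n muln_gt0 hq hm.
have ha : 0 < a by rewrite exprn_gt0.
have hnrq : nr ^+ q = nr * a by rewrite /a subn1 -exprS prednK.
set ffr := ((q * m) ^_ q)%:R : R.
have hqm1 : (q <= q * m)%N by rewrite leq_pmulr.
have hff0 : 0 < ffr by rewrite ltr0n ffact_gt0.
have hf1 : ffr <= nr * a by rewrite -hnrq /ffr /nr -natrX ler_nat ffact_le_exp.
have hf2 : nr * a <= ffr + q%:R ^+ 2 * a.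
  have := ffact_approxR R (q * m) q.
  rewrite -/nr -/ffr hnrq => h.
  rewrite -(ler_pM2r hnr).
  have -> : (ffr + q%:R ^+ 2 * a) * nr = ffr * nr + q%:R ^+ 2 * (nr * a) by ring.
  exact: h.
have hqm : nr = q%:R * m%:R by rewrite /nr natrM.
have hq0 : 0 < q%:R :> R by rewrite ltr0n.
have hm0 : 0 < m%:R :> R by rewrite ltr0n.
rewrite hqm in hf1 hf2; rewrite natrM in h2q h4q.
have [hlo hhi] := mu_close hSz he hq0 hm0 ha hff0 hf1 hf2 h2q h4q.
rewrite -/mu0 -hmu in hlo hhi.
have hmu0 : 0 < mu0 by rewrite /mu0 divr_gt0 // mulr_gt0.
have ht : 0 < t by rewrite /t divr_gt0 // mulr_gt0.
have hn0 : (0 < q * m)%N by rewrite muln_gt0 hq hm.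
have hbd : forall s y z, s \in arr (q * m) U -> y \in U -> z \in U ->
    `|F (map (tperm y z) s) - F s| <= 2.
  move=> s y z hs _ _; apply: Nb_bd.
  by move: hs; rewrite arr_mem ?enum_uniq // => /and3P [].
have hFb : forall s, s \in arr (q * m) U -> 0 <= F s <= 2 * 2 * (q * m)%:R.
  move=> s _; apply/andP; split; first by apply: sumr_ge0 => i _.
  apply: (@le_trans _ _ m%:R).
    rewrite -[m in X in _ <= X]card_ord -sumr_const /F /Nb.
    by apply: ler_sum => i _; case: (P _).
  have : (m <= 2 * 2 * (q * m))%N by rewrite !mulnA leq_pmull // !muln_gt0 hq.
  by rewrite -(ler_nat R) !natrM.
have [tl1 tl2] := tails (enum_uniq _) (size_enum_ord _) hn0 (ltr0Sn _ 1) hbd hFb ht.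
rewrite -/mu in tl1 tl2.
apply: (@le_trans _ _ (avg (arr (q * m) U)
   (fun s => (if t <= F s - mu then 1 else 0) + (if t <= mu - F s then 1 else 0)))).
  apply: avg_ler => s _.
  case: (boolP ((1 - e) * mu0 <= F s <= (1 + e) * mu0)) => h.
    by rewrite /= addr_ge0 //; case: ifP.
  rewrite /=.
  case: (leP t (F s - mu)) => h1; case: (leP t (mu - F s)) => h2; try lra.
  exfalso; move/negP: h; apply; apply/andP; split; rewrite /t in h1 h2 hhi; lra.
rewrite avg_add.
have := lerD tl1 tl2; lra.
Qed.

Unset Implicit Arguments.
Local Open Scope classical_set_scope.
Local Open Scope ring_scope.

Lemma pow_2q1 (R : realType) (x : R) q : (0 < q)%N -> x ^+ (2 * q - 1) = x * (x ^+ (q - 1)) ^+ 2.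
Proof.
move=> hq; rewrite -exprM -exprS; congr (_ ^+ _); lia.
Qed.

Lemma sqrt_step (R : realType) (x y : R) : 0 <= x -> 0 <= y -> y ^+ 2 <= x ^+ 2 -> y <= x.
Proof. by move=> hx hy; rewrite ler_pXn2r // nnegrE. Qed.

Lemma nat_aux q : (0 < q)%N -> (2 * q ^ 2 <= 16 * q ^ 4)%N.
Proof. move=> hq; have : (q ^ 2 <= q ^ 4)%N by rewrite leq_pexp2l. lia. Qed.

Theorem lemma3 (R : realType) (q : nat) (hq : (0 < q)%N)
  (eps : nat -> R) (heps : forall m, 0 < eps m)
  (S : forall m : nat, {set q.-tuple 'I_(q * m)})
  (hSdist : forall m (t : q.-tuple 'I_(q * m)), t \in S m -> uniq t)
  (hgrow : (fun m : nat => eps m ^+ 2 * (#|S m|%:R) ^+ 2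
              / (((q * m)%:R) ^+ (2 * q - 1) * ln ((q * m)%:R)))
           @ \oo --> +oo) :
  forall K : R, 0 < K ->
    exists C : R, exists M : nat, forall m : nat, (M <= m)%N ->
      prob_perm R (fun s : {perm 'I_(q * m)} =>
          ~~ ((1 - eps m) * (#|S m|%:R / (q%:R * ((q * m)%:R) ^+ (q - 1)))
                <= (Ncount (S m) s)%:R <=
              (1 + eps m) * (#|S m|%:R / (q%:R * ((q * m)%:R) ^+ (q - 1)))))
        <= C * ((q * m)%:R) `^ (- K).
Proof.
move=> K hK.
have hln2 : 0 < ln (2 : R) by apply: ln_gt0; lra.
set A := 128 * q%:R ^+ 2 * K + (ln (2 : R))^-1.
have hA1 : 128 * q%:R ^+ 2 * K <= A by rewrite /A lerDl invr_ge0 ltW.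
have hA2 : (ln (2 : R))^-1 <= A by rewrite /A lerDr !mulr_ge0 // ?ltW // exprn_ge0.
have hA0 : 0 < A by apply: lt_le_trans hA2; rewrite invr_gt0.
have [M0 _ hM0] := cvgry_ge hgrow A.
exists 2, (maxn M0 (16 * q ^ 4)) => m.
rewrite geq_max => /andP [hmM0 hm16].
have hX := hM0 m hmM0; rewrite /= in hX.
set e := eps m in hX *; set Sz := #|S m|%:R in hX *.
set nr := (q * m)%:R in hX *.
have he : 0 < e := heps m.
have hm : (0 < m)%N.
  apply: leq_trans hm16; rewrite muln_gt0 /= expn_gt0 hq.
  by [].
have hqm : (m <= q * m)%N by rewrite leq_pmull.
have hn16 : (16 * q ^ 4 <= q * m)%N := leq_trans hm16 hqm.
have h2q16 : (2 * q ^ 2 <= 16 * q ^ 4)%N := @nat_aux q hq.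
have hnr16 : 16 * q%:R ^+ 4 <= nr by rewrite /nr -natrX -natrM ler_nat.
have h2q : 2 * q%:R ^+ 2 <= nr.
  by rewrite /nr -natrX -natrM ler_nat (leq_trans h2q16 hn16).
have hq1 : 1 <= q%:R :> R by rewrite ler1n.
have hq4 : 1 <= q%:R ^+ 4 :> R by rewrite exprn_ege1.
have hnr2 : 2 <= nr by lra.
have hnr : 0 < nr by lra.
have hlnr : 0 < ln nr by apply: ln_gt0; lra.
have hlnge : ln 2 <= ln nr by rewrite ler_ln // posrE; lra.
set a := nr ^+ (q - 1).
have ha : 0 < a by rewrite exprn_gt0.
have hnra : nr ^+ q = nr * a by rewrite /a subn1 -exprS prednK.
rewrite pow_2q1 // -/a in hX.
have ha2 : 0 < a ^+ 2 by rewrite exprn_gt0.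
have hden : 0 < nr * a ^+ 2 * ln nr by rewrite !mulr_gt0.
have hX' : A * (nr * a ^+ 2 * ln nr) <= e ^+ 2 * Sz ^+ 2 by rewrite -ler_pdivlMr.
have hSzle : Sz <= nr * a.
  have h := max_card (mem (S m)); rewrite card_tuple card_ord in h.
  by rewrite -hnra /Sz /nr -natrX ler_nat.
have hSzge : 0 <= Sz by rewrite /Sz ler0n.
have hSz0 : 0 < Sz.
  have h := lt_le_trans (mulr_gt0 hA0 hden) hX'.
  rewrite lt_def hSzge andbT; apply/eqP => h0; move: h.
  by rewrite h0 expr0n /= mulr0 ltxx.
have henr : 4 * q%:R ^+ 2 <= e * nr.
  have h1 : e ^+ 2 * Sz ^+ 2 <= e ^+ 2 * (nr * a) ^+ 2.
    apply: ler_wpM2l; first by rewrite exprn_ge0 // ltW.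
    by rewrite ler_pXn2r // nnegrE // ltW // mulr_gt0.
  have h2 : (A * ln nr) * (nr * a ^+ 2) <= (e ^+ 2 * nr) * (nr * a ^+ 2).
    have -> : (A * ln nr) * (nr * a ^+ 2) = A * (nr * a ^+ 2 * ln nr) by ring.
    have -> : (e ^+ 2 * nr) * (nr * a ^+ 2) = e ^+ 2 * (nr * a) ^+ 2 by ring.
    exact: le_trans hX' h1.
  rewrite ler_pM2r ?mulr_gt0 // in h2.
  have h3 : 1 <= A * ln nr.
    have : (ln (2 : R))^-1 * ln 2 <= A * ln nr.
      apply: ler_pM => //; [by rewrite invr_ge0 ltW | exact: ltW].
    by rewrite mulVf ?gt_eqF.
  have h4 : nr <= (e * nr) ^+ 2.
    have -> : (e * nr) ^+ 2 = (e ^+ 2 * nr) * nr by ring.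
    have h5 : 1 <= e ^+ 2 * nr := le_trans h3 h2.
    by rewrite -[X in X <= _]mul1r ler_wpM2r // ltW.
  apply: sqrt_step; first by rewrite mulr_ge0 ?ltW.
    by rewrite mulr_ge0 // exprn_ge0.
  have -> : (4 * q%:R ^+ 2) ^+ 2 = 16 * q%:R ^+ 4 :> R by ring.
  exact: le_trans hnr16 h4.
apply: le_trans (prob_bound hq hm (hSdist m) he hSz0 h2q henr) _.
rewrite -/nr -/Sz -/a ler_pM2l //.
rewrite /powR ifF; last by apply/negbTE; rewrite gt_eqF.
rewrite ler_expR mulNr lerN2.
have -> : (e * (Sz / (q%:R * a)) / 2) ^+ 2 / (8 * 2 ^+ 2 * nr)
   = (e ^+ 2 * Sz ^+ 2) / (128 * q%:R ^+ 2 * (nr * a ^+ 2)).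
  by field; rewrite !gt_eqF // ?ltr0n.
rewrite ler_pdivlMr; last by rewrite !mulr_gt0 // ?exprn_gt0 // ltr0n.
apply: le_trans hX'.
have -> : K * ln nr * (128 * q%:R ^+ 2 * (nr * a ^+ 2)) = (128 * q%:R ^+ 2 * K) * (nr * a ^+ 2 * ln nr) by ring.
by rewrite ler_pM2r.
Qed.
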